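(* In the minor-player mean-field equilibrium, the mean inventory $E(t)=\int q\,m(t,dq)$ is the unique $C^2([0,T])$ solution of the two-point boundary value problem $$2\eta E''(t)+\gamma E'(t)=-\gamma^0\nu^0_t,\quad t\in[0,T],\qquad E(0)=E_0,\qquad E'(T)+\frac{\alpha}{\eta}E(T)=0,$$ and the remaining coefficients are recovered by $\mu_t=E'(t)$, $h_1(t)=2\eta E'(t)-2h_2(t)E(t)$, $h_0(t)=\frac1{4\eta}\int_t^Th_1(s)^2ds$, with $h_2(t)=-\frac{\alpha\eta}{\eta+\alpha(T-t)}$.
   Context: Competitive market with constants $\gamma^0,\gamma,\eta,\alpha>0$, horizon $T$, continuous major lit rate $t\mapsto\nu^0_t$, and initial minor inventory distribution $m_0$ with mean $E_0$. The equilibrium $(h,m,\mu)$ satisfies: $\partial_th+\frac1{4\eta}(\partial_qh)^2+(\gamma^0\nu^0_t+\gamma\mu_t)q=0$, $h(T,q)=-\alpha q^2$; $\partial_tm+\partial_q(m\,\partial_qh/(2\eta))=0$, $m(0)=m_0$; $\mu_t=\int\frac{\partial_qh(t,q)}{2\eta}m(t,dq)$; and $h(t,q)=h_0(t)+h_1(t)q+h_2(t)q^2$ with $h_0(T)=h_1(T)=0$, $h_2(T)=-\alpha$. *)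

(* Defs.v *)
From HB Require Import structures.
From mathcomp Require Import all_boot all_order all_algebra.
From mathcomp Require Import all_classical all_reals all_analysis.
Set Implicit Arguments. Unset Strict Implicit. Unset Printing Implicit Defensive.
Import Order.TTheory GRing.Theory Num.Theory.
Import numFieldNormedType.Exports.
Local Open Scope classical_set_scope.
Local Open Scope ring_scope.

Section Defs.
Context {R : realType}.

(* Admissible test functions for the weak form of the continuity equation:
   C^1 functions R -> R with bounded derivative (this class contains q |-> q). *)
Definition C1b_test (phi : R -> R) : Prop :=
  (forall x : R, derivable phi x 1) /\ continuous (derive1 phi) /\
  (exists M : R, forall x : R, `|derive1 phi x| <= M).

(* m : [0,T] -> P(R) is a weak solution of  d_t m + d_q (m v) = 0  on [0,T]:
   every m_t (t in [0,T]) has a finite first moment, and for every admissible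
   test function phi, t |-> int phi dm_t is continuous on [0,T] and
   differentiable on ]0,T[ with derivative int phi'(q) v(t,q) m_t(dq). *)
Definition weak_continuity_eq (T : R)
    (m : R -> probability (measurableTypeR R) R) (v : R -> R -> R) : Prop :=
  (forall t : R, 0 <= t <= T -> (m t).-integrable setT (fun q : R => (q%:E)%E)) /\
  forall phi : R -> R, C1b_test phi ->
    {within `[0, T], continuous (fun t : R => \int[m t]_q phi q)} /\
    (forall t : R, 0 < t < T ->
       is_derive t 1 (fun s : R => \int[m s]_q phi q)
                     (\int[m t]_q (derive1 phi q * v t q))).

(* F is in C^2([0,T]) with first and second derivatives F1, F2 on [0,T]:
   F, F1, F2 are continuous on [0,T], F' = F1 and F1' = F2 on ]0,T[
   (so F1, F2 are the continuous extensions of F', F'' to [0,T]). *)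
Definition C2_on (T : R) (F F1 F2 : R -> R) : Prop :=
  {within `[0, T], continuous F} /\
  {within `[0, T], continuous F1} /\
  {within `[0, T], continuous F2} /\
  (forall t : R, 0 < t < T -> is_derive t 1 F (F1 t) /\ is_derive t 1 F1 (F2 t)).

Definition mean_bvp (gamma0 gamma eta alpha T E0 : R) (nu0 : R -> R)
    (F F1 F2 : R -> R) : Prop :=
  (forall t : R, 0 <= t <= T -> 2 * eta * F2 t + gamma * F1 t = - (gamma0 * nu0 t)) /\
  F 0 = E0 /\
  F1 T + alpha / eta * F T = 0.

End Defs.

(* Main.v *)
Require Import Defs.
From HB Require Import structures.
From mathcomp Require Import all_boot all_order all_algebra.
From mathcomp Require Import all_classical all_reals all_analysis.
From mathcomp Require Import ring lra.
Import Order.TTheory GRing.Theory Num.Theory.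
Import numFieldNormedType.Exports.
Local Open Scope classical_set_scope.
Local Open Scope ring_scope.
Lemma quad_derive (R : realType) (a b c x : R) :
  is_derive x 1 (fun q : R => a + b * q + c * q ^+ 2) (b + 2 * c * x).
Proof.
apply: is_derive_eq.
rewrite /GRing.scale /= !mulr1 add0r mul1r; ring.
Qed.

Section W.
Context {R : realType} {A : set R}.
Lemma wcD {f g : R -> R} : {within A, continuous f} -> {within A, continuous g} ->
  {within A, continuous (fun x => f x + g x)}.
Proof. move=> cf cg x; exact: (continuousD (cf x) (cg x)). Qed.
Lemma wcM {f g : R -> R} : {within A, continuous f} -> {within A, continuous g} ->
  {within A, continuous (fun x => f x * g x)}.
Proof. move=> cf cg x; exact: (continuousM (cf x) (cg x)). Qed.
Lemma wcN {f : R -> R} : {within A, continuous f} ->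
  {within A, continuous (fun x => - f x)}.
Proof. move=> cf x; exact: (continuousN (cf x)). Qed.
Lemma wcC (c : R) : {within A, continuous (fun _ : R => c)}.
Proof. move=> x; exact: cvg_cst. Qed.
Lemma wcE {f g : R -> R} : {in A, f =1 g} -> {within A, continuous f} -> {within A, continuous g}.
Proof. move=> e; exact: subspace_eq_continuous. Qed.
Lemma wcG (f : R -> R) : continuous f -> {within A, continuous f}.
Proof. move=> cf; exact: continuous_subspaceT. Qed.
End W.

Section M.
Context {R : realType}.
Lemma ndecr_itv (f df : R -> R) a b : {within `[a,b], continuous f} ->
  (forall t, a < t < b -> is_derive t 1 f (df t)) ->
  (forall t, a < t < b -> 0 <= df t) ->
  forall x y, a <= x -> x <= y -> y <= b -> f x <= f y.
Proof.
move=> cf fd dpos; apply: ger0_derive1_ndecr => //.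
- by move=> x; rewrite in_itv /= => /fd [].
- by move=> x; rewrite in_itv /= => xi; rewrite derive1E; have [_ ->] := fd _ xi; exact: dpos.
Qed.

Lemma cst_itv (f : R -> R) a b : {within `[a,b], continuous f} ->
  (forall t, a < t < b -> is_derive t 1 f 0) ->
  forall x, a <= x <= b -> f x = f b.
Proof.
move=> cf fd x /andP[ax xb]; apply/eqP; rewrite eq_le; apply/andP; split.
  by apply: (@ndecr_itv f (fun _ => 0) a b cf fd).
have := @ndecr_itv (fun x => - f x) (fun _ => 0) a b (wcN cf).
move=> /(_ _ _ x b ax xb (lexx b)); rewrite lerN2; apply => //.
move=> t /fd H; rewrite -oppr0; exact: is_deriveN.
Qed.

Lemma near_is_derive (f g : R -> R) a b t d : (forall s, a < s < b -> f s = g s) ->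
  a < t < b -> is_derive t 1 f d -> is_derive t 1 g d.
Proof.
move=> fg tab; apply: near_eq_is_derive.
have : t \in `]a, b[ by rewrite in_itv.
move=> /near_in_itvoo; apply: filterS => s; rewrite in_itv /=; exact: fg.
Qed.
End M.

Section M2.
Context {R : realType}.
Lemma deriv_cont (f : R -> R) (x d : R) : is_derive x (1:R) f d -> {for x, continuous f}.
Proof. move=> [df _]; apply: differentiable_continuous; exact/derivable1_diffP. Qed.

Lemma dexpR (a s : R) : is_derive s 1 (fun s => expR (a * s)) (a * expR (a * s)).
Proof.
have H : is_derive s 1 ( *%R a) a.
  by apply: is_derive_eq; rewrite /GRing.scale /= mulr1.
have := is_derive1_comp (is_derive_expR (a * s)) H.
by rewrite mulrC.
Qed.

Lemma cexpR (a : R) : continuous (fun s => expR (a * s)).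
Proof. move=> x; exact: (@deriv_cont _ _ _ (dexpR a x)). Qed.
End M2.

Theorem mainTheorem8 (R : realType) (gamma0 gamma eta alpha T : R)
  (nu0 : R -> R) (m0 : probability (measurableTypeR R) R) (E0 : R)
  (h : R -> R -> R) (m : R -> probability (measurableTypeR R) R) (mu : R -> R)
  (h0 h1 h2 : R -> R) :
  0 < gamma0 -> 0 < gamma -> 0 < eta -> 0 < alpha -> 0 < T ->
  {within `[0, T], continuous nu0} ->
  (* m0 has mean E0 *)
  m0.-integrable setT (fun q : R => (q%:E)%E) ->
  E0 = \int[m0]_q q ->
  (* HJB equation, h(T,q) = -alpha q^2 *)
  (forall t : R, 0 < t < T -> forall q : R,
     derivable (fun s : R => h s q) t 1 /\
     derive1 (fun s : R => h s q) t + 1 / (4 * eta) * (derive1 (h t) q) ^+ 2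
       + (gamma0 * nu0 t + gamma * mu t) * q = 0) ->
  (forall q : R, {within `[0, T], continuous (fun s : R => h s q)}) ->
  (forall q : R, h T q = - (alpha * q ^+ 2)) ->
  (* continuity equation, m(0) = m0 *)
  weak_continuity_eq T m (fun t q => derive1 (h t) q / (2 * eta)) ->
  m 0 = m0 ->
  (* consistency condition *)
  (forall t : R, 0 <= t <= T -> mu t = \int[m t]_q (derive1 (h t) q / (2 * eta))) ->
  (* quadratic ansatz *)
  (forall t : R, 0 <= t <= T -> forall q : R,
     h t q = h0 t + h1 t * q + h2 t * q ^+ 2) ->
  h0 T = 0 -> h1 T = 0 -> h2 T = - alpha ->
  let E := fun t : R => \int[m t]_q q in
  exists E1 E2 : R -> R,
    C2_on T E E1 E2 /\
    mean_bvp gamma0 gamma eta alpha T E0 nu0 E E1 E2 /\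
    (forall F F1 F2 : R -> R, C2_on T F F1 F2 ->
       mean_bvp gamma0 gamma eta alpha T E0 nu0 F F1 F2 ->
       forall t : R, 0 <= t <= T -> F t = E t) /\
    (forall t : R, 0 <= t <= T ->
       mu t = E1 t /\
       h1 t = 2 * eta * E1 t - 2 * h2 t * E t /\
       h0 t = 1 / (4 * eta) * \int[lebesgue_measure]_(s in `[t, T]) (h1 s ^+ 2) /\
       h2 t = - (alpha * eta / (eta + alpha * (T - t)))).
Proof.
move=> g0p gp etap alp Tp nuc m0int E0def HJB hcont hT wce m0eq muc hq h0T h1T h2T E.
have eta0 : eta != 0 by rewrite gt_eqF.
have itvcc : forall t, 0 <= t <= T -> t \in `[0, T] by move=> t; rewrite in_itv.
have cc_of : forall t, t \in `[0, T] -> 0 <= t <= T by move=> t; rewrite in_itv.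
have oo_cc : forall t, 0 < t < T -> 0 <= t <= T.
  by move=> t /andP[a b]; rewrite !ltW.
have dh : forall t, 0 <= t <= T -> forall q, derive1 (h t) q = h1 t + 2 * h2 t * q.
  move=> t tI q; rewrite derive1E.
  have -> : h t = (fun q => h0 t + h1 t * q + h2 t * q ^+ 2).
    by apply/funext => x; rewrite hq.
  by have [_ ->] := quad_derive _ (h0 t) (h1 t) (h2 t) q.
have e0 : forall t, 0 <= t <= T -> h t 0 = h0 t.
  by move=> t tI; rewrite hq // mulr0 expr0n /= mulr0 !addr0.
have e1 : forall t, 0 <= t <= T -> (h t 1 - h t (-1)) / 2 = h1 t.
  by move=> t tI; rewrite !hq //; field.
have e2 : forall t, 0 <= t <= T -> (h t 1 + h t (-1)) / 2 - h t 0 = h2 t.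
  by move=> t tI; rewrite !hq //; field.
have c0 : {within `[0, T], continuous h0}.
  apply: wcE (hcont 0) => t; rewrite inE /= in_itv /= => tI; exact: e0.
have c1 : {within `[0, T], continuous h1}.
  apply: wcE (wcM (wcD (hcont 1) (wcN (hcont (-1)))) (wcC 2^-1)) => t; rewrite inE /= in_itv /= => tI; exact: e1.
have c2 : {within `[0, T], continuous h2}.
  apply: wcE (wcD (wcM (wcD (hcont 1) (hcont (-1))) (wcC 2^-1)) (wcN (hcont 0))) => t; rewrite inE /= in_itv /= => tI; exact: e2.
have HJB' : forall t, 0 < t < T -> forall q,
    is_derive t 1 (fun s => h s q)
      (- (1 / (4 * eta) * (h1 t + 2 * h2 t * q) ^+ 2) - (gamma0 * nu0 t + gamma * mu t) * q).
  move=> t tI q; have [dq eq] := HJB t tI q.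
  rewrite dh ?oo_cc // in eq.
  apply: DeriveDef => //; rewrite -derive1E.
  by apply/eqP; rewrite -subr_eq0 -eq; apply/eqP; ring.
have dh0 : forall t, 0 < t < T -> is_derive t 1 h0 (- (h1 t ^+ 2) / (4 * eta)).
  move=> t tI; apply: (@near_is_derive _ (fun s => h s 0) _ 0 T) => //.
    by move=> s /oo_cc; exact: e0.
  apply: is_derive_eq; first exact: (HJB' t tI 0).
  by field.
have dh1 : forall t, 0 < t < T ->
    is_derive t 1 h1 (- (h1 t * h2 t) / eta - (gamma0 * nu0 t + gamma * mu t)).
  move=> t tI; apply: (@near_is_derive _ (fun s => (h s 1 - h s (-1)) / 2) _ 0 T) => //.
    by move=> s /oo_cc; exact: e1.
  have := HJB' t tI 1; have := HJB' t tI (-1) => d1 d2.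
  apply: is_derive_eq.
  by rewrite /GRing.scale /=; field.
have dh2 : forall t, 0 < t < T -> is_derive t 1 h2 (- (h2 t ^+ 2) / eta).
  move=> t tI; apply: (@near_is_derive _ (fun s => (h s 1 + h s (-1)) / 2 - h s 0) _ 0 T) => //.
    by move=> s /oo_cc; exact: e2.
  have := HJB' t tI 1; have := HJB' t tI (-1); have := HJB' t tI 0 => d0 d1 d2.
  apply: is_derive_eq.
  by rewrite /GRing.scale /=; field.
have [mint wce2] := wce.
have did : forall x : R, derive1 id x = 1.
  by move=> x; rewrite derive1E; have [_ ->] := @is_derive_id _ R x 1.
have C1id : C1b_test (@id R).
  split; first by move=> x; exact: derivable_id.
  split; first by rewrite (_ : derive1 id = fun _ => 1); [exact: cst_continuous | apply/funext => x; exact: did].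
  by exists 1 => x; rewrite did normr1.
have [Ec Ed] := wce2 _ C1id.
have muE : forall t, 0 <= t <= T -> mu t = h1 t / (2 * eta) + h2 t / eta * E t.
  move=> t tI; rewrite muc //.
  rewrite (@eq_Rintegral _ _ _ (m t) _ (fun q => h1 t / (2 * eta) + h2 t / eta * q)); last first.
    by move=> q _; rewrite dh //; field.
  rewrite RintegralD //; last first.
    - rewrite (_ : EFin \o _ = fun x => (h2 t / eta)%:E * (EFin x))%E; last by apply/funext => x; rewrite /= EFinM.
      apply: integrableZl => //. exact: (mint t tI).
    - exact: finite_measure_integrable_cst.
  rewrite Rintegral_cst //.
  have P1 := @probability_setT _ _ _ (m t).
  rewrite [fine _](_ : _ = 1) ?mulr1; last by rewrite -[RHS]/(fine 1%E); congr fine; exact: P1.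
  rewrite RintegralZl //.
  exact: (mint t tI).
have Ecc : {within `[0, T], continuous E} by exact: Ec.
have dE : forall t, 0 < t < T -> is_derive t 1 E (mu t).
  move=> t tI; have := Ed t tI.
  rewrite (@eq_Rintegral _ _ _ (m t) _ (fun q => derive1 (h t) q / (2 * eta))); last first.
    by move=> q _; rewrite did mul1r.
  by rewrite -muc ?oo_cc.
have muc2 : {within `[0, T], continuous mu}.
  apply: wcE (wcD (wcM c1 (wcC (2 * eta)^-1)) (wcM (wcM c2 (wcC eta^-1)) Ecc)).
  by move=> t; rewrite inE /= in_itv /= => tI; rewrite muE.
pose E2 := fun t => (- (h1 t * h2 t) / eta - (gamma0 * nu0 t + gamma * mu t)) / (2 * eta)
   + (- (h2 t * h2 t) / eta * E t + h2 t * mu t) / eta.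
have E2c : {within `[0, T], continuous E2}.
  have cA := wcD (wcM (wcN (wcM c1 c2)) (wcC eta^-1)) (wcN (wcD (wcM (wcC gamma0) nuc) (wcM (wcC gamma) muc2))).
  have cB := wcD (wcM (wcM (wcN (wcM c2 c2)) (wcC eta^-1)) Ecc) (wcM c2 muc2).
  exact: (wcD (wcM cA (wcC (2 * eta)^-1)) (wcM cB (wcC eta^-1))).
have dmu : forall t, 0 < t < T -> is_derive t 1 mu (E2 t).
  move=> t tI; apply: (@near_is_derive _ (fun s => h1 s / (2 * eta) + h2 s / eta * E s) _ 0 T) => //.
    by move=> s /oo_cc sI; rewrite muE.
  have := dh1 t tI; have := dh2 t tI; have := dE t tI => d1 d2 d3.
  apply: is_derive_eq.
  by rewrite /GRing.scale /= /E2 (muE t (oo_cc _ tI)); field.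

pose p := fun s => eta + alpha * (T - s).
have ppos : forall s, s <= T -> 0 < p s.
  move=> s sT; rewrite /p; have : 0 <= alpha * (T - s) by apply: mulr_ge0; [exact: ltW | by rewrite subr_ge0].
  lra.
pose k2 := fun s => - (alpha * eta) * (p s)^-1.
have dk2 : forall t, t <= T -> is_derive t 1 k2 (- (k2 t * k2 t) / eta).
  move=> t tT.
  have dp : is_derive t 1 p (- alpha).
    rewrite /p; apply: is_derive_eq; rewrite /GRing.scale /=; ring.
  have dv := is_deriveV (lt0r_neq0 (ppos t tT)) dp.
  rewrite /k2; apply: is_derive_eq.
  rewrite /GRing.scale /=; have := ppos t tT; rewrite /p => pp.
  have pn : eta + alpha * (T - t) != 0 by rewrite gt_eqF.
  by rewrite -exprVn expr2; field; rewrite eta0 pn.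
have k2c : {within `[0, T], continuous k2}.
  apply: continuous_in_subspaceT => x; rewrite inE /= in_itv /= => /andP[_ xT].
  exact: (@deriv_cont _ _ _ _ (dk2 x xT)).
have [c cI hc] := EVT_max (ltW Tp) c2.
pose B := h2 c.
pose L := 2 * `|B| / eta.
pose f := fun s => (h2 s - k2 s) * (h2 s - k2 s) * expR (L * s).
have fc : {within `[0, T], continuous f}.
  have ce : {within `[0, T], continuous (fun s => expR (L * s))} by apply: wcG; exact: cexpR.
  by repeat first [assumption | apply: wcD | apply: wcM | apply: wcN].
have df : forall t, 0 < t < T -> is_derive t 1 f
    ((h2 t - k2 t) ^+ 2 * (2 * (`|B| - (h2 t + k2 t)) / eta) * expR (L * t)).
  move=> t tI; have d1 := dh2 t tI; have d2 := dk2 t (ltW (andP tI).2).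
  have d3 := dexpR L t.
  rewrite /f; apply: is_derive_eq.
  by rewrite /GRing.scale /= /L; field.
have dfpos : forall t, 0 < t < T ->
    0 <= (h2 t - k2 t) ^+ 2 * (2 * (`|B| - (h2 t + k2 t)) / eta) * expR (L * t).
  move=> t tI; have tI' := oo_cc _ tI.
  apply: mulr_ge0; last exact: expR_ge0.
  apply: mulr_ge0; first exact: sqr_ge0.
  apply: divr_ge0; last exact: ltW.
  apply: mulr_ge0 => //; rewrite subr_ge0.
  have hB : h2 t <= `|B| by apply: le_trans (ler_norm _); apply: hc; exact: itvcc.
  have k0 : k2 t <= 0.
    rewrite /k2 mulNr oppr_le0; apply: mulr_ge0; first by apply: mulr_ge0; exact: ltW.
    by rewrite invr_ge0; apply: ltW; apply: ppos; case/andP: tI'.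
  lra.
have H2 : forall t, 0 <= t <= T -> h2 t = - (alpha * eta / (eta + alpha * (T - t))).
  move=> t tI; have := @ndecr_itv _ f (fun t => (h2 t - k2 t) ^+ 2 * (2 * (`|B| - (h2 t + k2 t)) / eta) * expR (L * t)) 0 T fc df dfpos.
  case/andP: (tI) => t0 tT.
  move=> /(_ t T t0 tT (lexx T)).
  have -> : f T = 0.
    rewrite /f /k2 /p h2T subrr mulr0 addr0.
    by rewrite (_ : - alpha - - (alpha * eta) * eta^-1 = 0) ?mul0r // ; field.
  have f0 : 0 <= f t.
    by rewrite /f -expr2; apply: mulr_ge0; [exact: sqr_ge0 | exact: expR_ge0].
  move=> fle; have : f t = 0 by apply/eqP; rewrite eq_le fle f0.
  rewrite /f => /eqP; rewrite mulf_eq0 (gt_eqF (expR_gt0 _)) orbF mulf_eq0 orbb subr_eq0.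
  move=> /eqP ->; rewrite /k2 /p; by rewrite mulNr mulrC.
have H0 : forall t, 0 <= t <= T ->
    h0 t = 1 / (4 * eta) * \int[lebesgue_measure]_(s in `[t, T]) (h1 s ^+ 2).
  move=> t /andP[t0 tT]; case: (ltP t T) => [tlt|tge]; last first.
    have -> : t = T by apply/le_anti; rewrite tT tge.
    by rewrite set_itv1 Rintegral_set1 h0T mulr0.
  have sub : `[t, T] `<=` `[0, T].
    move=> x /=; rewrite !in_itv /= => /andP[a b]; rewrite b andbT; exact: le_trans t0 a.
  pose F := fun s => - (4 * eta) * h0 s.
  have cF : {within `[t, T], continuous F}.
    exact: (continuous_subspaceW sub (wcM (wcC _) c0)).
  have [_ cl cr] := (continuous_within_itvP _ tlt).1 cF.
  have cf : {within `[t, T], continuous (fun s => h1 s ^+ 2)}.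
    apply: (continuous_subspaceW sub); apply: wcE (wcM c1 c1) => x _; by rewrite expr2.
  have dF : forall x, t < x < T -> is_derive x 1 F (h1 x ^+ 2).
    move=> x /andP[a b]; have xI : 0 < x < T by rewrite b andbT; exact: le_lt_trans t0 a.
    have := dh0 x xI => d0.
    rewrite /F; apply: is_derive_eq.
    by rewrite /GRing.scale /=; field.
  have dcF : derivable_oo_LRcontinuous F t T.
    split; [move=> x; rewrite in_itv /= => xI; by have [] := dF x xI | exact: cl | exact: cr].
  have F'f : {in `]t, T[, derive1 F =1 (fun s => h1 s ^+ 2)}.
    move=> x; rewrite in_itv /= => xI; rewrite derive1E; by have [_ ->] := dF x xI.
  have := continuous_FTC2 tlt cf dcF F'f.
  rewrite /Rintegral => ->; rewrite -EFinB /= /F h0T.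
  by field.
have bvpE : forall t, 0 <= t <= T -> 2 * eta * E2 t + gamma * mu t = - (gamma0 * nu0 t).
  by move=> t tI; rewrite /E2 !(muE t tI); field.
have E0eq : E 0 = E0 by rewrite /E m0eq E0def.
have ETeq : mu T + alpha / eta * E T = 0.
  have TI : 0 <= T <= T by apply/andP; split; [exact: ltW | exact: lexx].
  by rewrite muE // h1T h2T; field.
have uniq : forall F F1 F2 : R -> R, C2_on T F F1 F2 ->
    mean_bvp gamma0 gamma eta alpha T E0 nu0 F F1 F2 ->
    forall t : R, 0 <= t <= T -> F t = E t.
  move=> F F1 F2 [Fc [F1c [F2c Fd]]] [Fb [F0 FT]].
  pose k := gamma / (2 * eta).
  have kp : 0 < k by rewrite /k divr_gt0 // mulr_gt0.
  have k0 : k != 0 by rewrite gt_eqF.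
  have rel : forall s, 0 <= s <= T -> F2 s = E2 s - k * (F1 s - mu s).
    move=> s sI; have := Fb s sI; have := bvpE s sI => ee1 ee2.
    have H : 2 * eta * (F2 s - (E2 s - k * (F1 s - mu s))) = 0.
      rewrite /k; transitivity ((2 * eta * F2 s + gamma * F1 s) - (2 * eta * E2 s + gamma * mu s)).
        by field.
      by rewrite ee1 ee2 subrr.
    move: H => /eqP; rewrite mulf_eq0 mulf_eq0 pnatr_eq0 /= (negbTE eta0) /= subr_eq0.
    by move=> /eqP.
  have ce : {within `[0, T], continuous (fun s => expR (k * s))} by apply: wcG; exact: cexpR.
  have P1 : forall s, 0 <= s <= T ->
      (F1 s - mu s) * expR (k * s) = (F1 T - mu T) * expR (k * T).
    apply: (@cst_itv _ (fun s => (F1 s - mu s) * expR (k * s))).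
      exact: (wcM (wcD F1c (wcN muc2)) ce).
    move=> s sI; have d1 := (Fd s sI).2; have d2 := dmu s sI; have d3 := dexpR k s.
    by apply: is_derive_eq; rewrite /GRing.scale /= (rel s (oo_cc _ sI)); ring.
  have P2 : forall s, 0 <= s <= T ->
      (F s - E s) + (F1 s - mu s) / k = (F T - E T) + (F1 T - mu T) / k.
    apply: (@cst_itv _ (fun s => (F s - E s) + (F1 s - mu s) / k)).
      exact: (wcD (wcD Fc (wcN Ecc)) (wcM (wcD F1c (wcN muc2)) (wcC k^-1))).
    move=> s sI; have d1 := (Fd s sI).2; have d2 := dmu s sI; have d0 := (Fd s sI).1.
    have d4 := dE s sI.
    by apply: is_derive_eq; rewrite /GRing.scale /= (rel s (oo_cc _ sI)); field.
  have I0 : (0:R) <= 0 <= T by apply/andP; split; [exact: lexx | exact: ltW].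
  have IT : (0:R) <= T <= T by apply/andP; split; [exact: ltW | exact: lexx].
  have G10 := P1 0 I0; rewrite mulr0 expR0 mulr1 in G10.
  have G0 := P2 0 I0; rewrite F0 E0eq subrr add0r G10 in G0.
  pose e := expR (k * T).
  have eg1 : 1 <= e.
    have := expR_ge1Dx (k * T); have : 0 <= k * T by rewrite mulr_ge0 // ltW.
    rewrite /e; lra.
  have GT : F T - E T = (F1 T - mu T) * (e - 1) / k.
    rewrite (_ : (F1 T - mu T) * (e - 1) / k = (F1 T - mu T) * e / k - (F1 T - mu T) / k); last by field.
    by rewrite /e G0 addrK.
  have bd : (F1 T - mu T) * (1 + alpha / eta * ((e - 1) / k)) = 0.
    have : (F1 T - mu T) + alpha / eta * (F T - E T) = 0.
      transitivity ((F1 T + alpha / eta * F T) - (mu T + alpha / eta * E T)); first by ring.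
      by rewrite FT ETeq subrr.
    by rewrite GT => <-; ring.
  have pos : 0 < 1 + alpha / eta * ((e - 1) / k).
    have : 0 <= alpha / eta * ((e - 1) / k).
      apply: mulr_ge0; first by apply: divr_ge0; exact: ltW.
      by apply: divr_ge0; [rewrite subr_ge0 | exact: ltW].
    lra.
  have G1T : F1 T - mu T = 0.
    by move: bd => /eqP; rewrite mulf_eq0 (gt_eqF pos) orbF => /eqP.
  move=> t tI.
  have G1t : F1 t - mu t = 0.
    have := P1 t tI; rewrite G1T mul0r => /eqP; rewrite mulf_eq0 (gt_eqF (expR_gt0 _)) orbF.
    by move=> /eqP.
  have := P2 t tI; rewrite G1t G1T GT G1T !mul0r addr0 => /eqP.
  by rewrite addr0 subr_eq0 => /eqP.
exists mu, E2; split.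
  split; first exact: Ecc.
  split; first exact: muc2.
  split; first exact: E2c.
  move=> t tI; split; [exact: dE | exact: dmu].
split; first by split; [exact: bvpE | split].
split; first exact: uniq.
move=> t tI; split => //; split; last split.
- by rewrite muE //; field.
- exact: H0.
- exact: H2.
Qed.
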